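(* Let $n\ge 2$, let $v_1<\cdots<v_{n-1}$ be positive integers with $\mathrm{ML}(v_1,\ldots,v_{n-1})\ge L$, and fix $0<\varepsilon<L$. Then for every positive integer $v_n$ with $v_n\ge \left(\frac{L-\varepsilon}{\varepsilon}\right)v_{n-1}$, we have $\mathrm{ML}(v_1,\ldots,v_n)\ge L-\varepsilon$.
   Context: For a real number $x$, $\Vert x\Vert$ denotes the distance from $x$ to the nearest integer. For positive integers $v_1,\ldots,v_k$, the maximum loneliness is $\mathrm{ML}(v_1,\ldots,v_k)=\max_{t\in\mathbb{R}}\min_{1\le i\le k}\Vert t v_i\Vert$. *)

(* Defs.v *)
From HB Require Import structures.
From mathcomp Require Import all_boot all_order all_algebra.
From mathcomp Require Import all_classical all_reals.
Set Implicit Arguments. Unset Strict Implicit. Unset Printing Implicit Defensive.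
Import Order.TTheory GRing.Theory Num.Theory.
Local Open Scope ring_scope.
Local Open Scope classical_set_scope.

Definition dist_int {R : realType} (x : R) : R :=
  Num.min (x - (Num.floor x)%:~R) ((Num.floor x + 1)%:~R - x).

(* min_i ||t v_i|| for a (nonempty) list of positive integers v
   (the neutral element 1 is irrelevant on nonempty lists, as ||.|| <= 1/2) *)
Definition min_lonely {R : realType} (v : seq nat) (t : R) : R :=
  \big[Num.min/1]_(vi <- v) dist_int (t * vi%:R).

(* ML(v) = max_t min_i ||t v_i||, written as the supremum over t
   (the maximum is attained, so it equals the sup) *)
Definition ML {R : realType} (v : seq nat) : R :=
  sup (range (@min_lonely R v)).

(* Main.v *)
Require Import Defs.
From mathcomp Require Import all_boot all_order all_algebra.
From mathcomp Require Import all_classical all_reals.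
From mathcomp Require Import ring lra zify.
Import Order.TTheory GRing.Theory Num.Theory.
Local Open Scope ring_scope.

Section S.
Variable R : realType.

Lemma distA (c x : R) : c <= dist_int x -> forall k : int, c <= `|x - k%:~R|.
Proof.
rewrite /dist_int le_min => /andP[h1 h2] k.
have /andP[f1 f2] := floor_itv x.
have [hk|hk] := lerP k (Num.floor x).
  have : k%:~R <= (Num.floor x)%:~R :> R by rewrite ler_int.
  have := ler_norm (x - k%:~R). lra.
have : (Num.floor x + 1)%:~R <= k%:~R :> R by rewrite ler_int; lia.
have := ler_norm (k%:~R - x); rewrite distrC. lra.
Qed.

Lemma distB (c x : R) : (forall k : int, c <= `|x - k%:~R|) -> c <= dist_int x.
Proof.
move=> h; rewrite /dist_int le_min.
have /andP[f1 f2] := floor_itv x.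
have h1 := h (Num.floor x); have h2 := h (Num.floor x + 1).
rewrite ger0_norm in h1; last lra.
rewrite ler0_norm in h2; last lra.
apply/andP; split; lra.
Qed.

Lemma dist_half (x : R) : dist_int x <= 1/2.
Proof.
rewrite /dist_int intrD ge_min; apply/orP.
case: (lerP (x - (Num.floor x)%:~R) (1/2)) => h; [left|right]; lra.
Qed.

Lemma ml_le1 (s : seq nat) (t : R) : min_lonely s t <= 1.
Proof.
rewrite /min_lonely; elim: s => [|a s IH]; first by rewrite big_nil.
by rewrite big_cons ge_min IH orbT.
Qed.

Lemma ml_le (s : seq nat) (t : R) x : x \in s -> min_lonely s t <= dist_int (t * x%:R).
Proof.
rewrite /min_lonely; elim: s => [|a s IH] //; rewrite in_cons big_cons => /orP[/eqP->|h].
  by rewrite ge_min lexx.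
by rewrite ge_min IH ?orbT.
Qed.

Lemma ml_ge (s : seq nat) (t a : R) : a <= 1 ->
  (forall x, x \in s -> a <= dist_int (t * x%:R)) -> a <= min_lonely s t.
Proof.
rewrite /min_lonely => a1; elim: s => [|b s IH] h; first by rewrite big_nil.
rewrite big_cons le_min h ?mem_head // IH // => x xs.
by apply: h; rewrite in_cons xs orbT.
Qed.

Lemma exists_y (x0 c : R) : 0 <= c -> c <= 1/2 ->
  exists y, [/\ x0 <= y, y <= x0 + 2 * c & forall j : int, c <= `|y - j%:~R|].
Proof.
move=> c0 c12.
set k0 := Num.floor (x0 + c).
have /andP[f1 f2] := floor_itv (x0 + c); rewrite -/k0 in f1 f2.
have main : forall y, (k0%:~R + c <= y) -> y <= k0%:~R + 1 - c ->
    forall j : int, c <= `|y - j%:~R|.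
  move=> y h1 h2 j.
  have [hj|hj] := lerP j k0.
    have : j%:~R <= k0%:~R :> R by rewrite ler_int.
    have := ler_norm (y - j%:~R). lra.
  have : (k0 + 1)%:~R <= j%:~R :> R by rewrite ler_int; lia.
  have := ler_norm (j%:~R - y); rewrite distrC intrD. lra.
rewrite intrD in f2.
have [h|h] := ltP x0 (k0%:~R + c).
  exists (k0%:~R + c); split; [lra|lra|]; apply: main; lra.
exists x0; split; [lra|lra|]; apply: main; lra.
Qed.

Lemma mono (n : nat) (v : nat -> nat) :
  (forall i, (1 <= i)%N -> (i < n.-1)%N -> (v i < v i.+1)%N) ->
  forall i j, (1 <= i)%N -> (i <= j)%N -> (j <= n.-1)%N -> (v i <= v j)%N.
Proof.
move=> hinc i; elim=> [|j IH] i1 ij jn; first lia.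
case: (ltngtP i j.+1) => h; last by rewrite h.
  have := IH i1 h ltac:(lia); have := hinc j ltac:(lia) ltac:(lia); lia.
lia.
Qed.

End S.

Theorem proposition8p1 (R : realType) (n : nat) (v : nat -> nat) (L eps : R) :
  (2 <= n)%N ->
  (forall i, (1 <= i <= n.-1)%N -> (0 < v i)%N) ->
  (forall i, (1 <= i)%N -> (i < n.-1)%N -> (v i < v i.+1)%N) ->
  L <= ML [seq v i | i <- iota 1 n.-1] ->
  0 < eps -> eps < L ->
  forall vn : nat, (0 < vn)%N ->
    ((L - eps) / eps) * (v n.-1)%:R <= vn%:R ->
    L - eps <= ML ([seq v i | i <- iota 1 n.-1] ++ [:: vn]).
Proof.
move=> n2 vpos vinc hL e0 eL vn vn0 hvn.
set s1 := [seq v i | i <- iota 1 n.-1] in hL *.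
set w := v n.-1 in hvn.
have w0 : (0 < w)%N by apply: vpos; lia.
have hs1 : forall x, x \in s1 -> (x <= w)%N.
  move=> x /mapP[i]; rewrite mem_iota => hi ->.
  rewrite /w; apply: (@mono n v vinc i n.-1); lia.
have v1 : v 1 \in s1 by apply: map_f; rewrite mem_iota; lia.
have hsup1 : has_sup (range (@min_lonely R s1)).
  split; first by exists (min_lonely s1 0); exists 0.
  by exists 1 => _ [t _ <-]; apply: ml_le1.
have hub : has_ubound (range (@min_lonely R (s1 ++ [:: vn]))).
  by exists 1 => _ [t _ <-]; apply: ml_le1.
rewrite /ML; apply/ler_addgt0Pr => e e_gt0.
set e1 := Num.min e eps.
have e1e : e1 <= e by rewrite ge_min lexx.
have e1eps : e1 <= eps by rewrite ge_min lexx orbT.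
have e10 : 0 < e1 by rewrite lt_min e_gt0 e0.
have [_ [t0 _ <-] ht0] := @sup_adherent R _ (e1 / 2) ltac:(lra) hsup1.
set L' := min_lonely s1 t0 in ht0.
have hL'1 : L' <= 1/2.
  exact: (le_trans (ml_le R s1 t0 (v 1) v1) (dist_half R _)).
have hfn : ML s1 = sup (range (min_lonely s1)) by [].
rewrite -hfn in ht0.
set c := L - eps.
have c0 : 0 <= c by rewrite /c; lra.
have c12 : c <= 1/2 by rewrite /c; lra.
have [y [y1 y2 y3]] := exists_y R ((t0 - eps / (w%:R)) * vn%:R) c c0 c12.
set delta := eps / w%:R.
rewrite -/delta in y1 y2.
have wR : 0 < w%:R :> R by rewrite ltr0n.
have vnR : 0 < vn%:R :> R by rewrite ltr0n.
have hc : c <= delta * vn%:R.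
  have -> : delta * vn%:R = c + (eps / w%:R) * (vn%:R - c / eps * w%:R).
    rewrite /delta /c; field; apply/andP; split; apply: lt0r_neq0 => //.
  rewrite lerDl; apply: mulr_ge0; last by rewrite subr_ge0.
  by apply: divr_ge0; apply: ltW.
have d0 : 0 < delta by apply: divr_gt0.
set t := y / vn%:R.
have tvn : t * vn%:R = y by rewrite /t mulfVK // lt0r_neq0.
have ht1 : t0 - delta <= t.
  rewrite -subr_ge0 -(pmulr_lge0 _ vnR) mulrBl tvn. lra.
have ht2 : t <= t0 + delta.
  rewrite -subr_ge0 -(pmulr_lge0 _ vnR) mulrBl tvn. lra.
have htt : `|t - t0| <= delta by rewrite ler_norml; apply/andP; split; lra.
have hcdef : c = L - eps by [].
have hg : c - e1/2 <= min_lonely (s1 ++ [:: vn]) t.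
  apply: ml_ge; first lra.
  move=> x; rewrite mem_cat => /orP[xs|]; last first.
    rewrite inE => /eqP ->; rewrite tvn; apply: distB => k; have := y3 k; lra.
  apply: distB => k.
  have hx := hs1 x xs.
  have h0 := distA R L' (t0 * x%:R) (ml_le R s1 t0 x xs) k.
  have hd : `|t * x%:R - t0 * x%:R| <= eps.
    rewrite -mulrBl normrM (ger0_norm (ler0n _ _)).
    have -> : eps = delta * w%:R by rewrite /delta mulfVK // lt0r_neq0.
    apply: ler_pM => //; first by rewrite ler_nat.
  have := ler_distD (t * x%:R) (t0 * x%:R) k%:~R.
  rewrite distrC in hd.
  lra.
have := ub_le_sup hub (x := min_lonely (s1 ++ [:: vn]) t) ltac:(by exists t).
lra.
Qed.
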